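(* Let $B(y)=|h(y)-(1-V)|$ be randomized response with $h:\mathbb Y\to\{0,1\}$, $V\sim\mathrm{Bern}(\theta)$, $\theta\in[0,1]$, and let $S$ be subsampling without replacement with batch size $q$. Then for all $\alpha>1$ and all datasets $x\simeq_\Delta x'$ of size $N$, $$\Lambda_\alpha(m_x\|m_{x'})\le\max_{\tau\in\{\theta,1-\theta\}}\Lambda_\alpha\big((1-w)\mathrm{Bern}(\cdot\mid\theta)+w\,\mathrm{Bern}(\cdot\mid\tau)\ \big\|\ (1-w)\mathrm{Bern}(\cdot\mid\theta)+w\,\mathrm{Bern}(\cdot\mid1-\tau)\big),$$ with $w=q/N$.
   Context: Datasets are finite sets with more than $q$ elements; batches are subsets of size $q$; subsampling without replacement: $s_x(y)=\binom{|x|}{q}^{-1}$ for $y\subseteq x$, $|y|=q$. $b_y$ is the pmf of $B(y)$ on $\{0,1\}$ and $m_x=\sum_y b_y s_x(y)$. $\mathrm{Bern}(\cdot\mid p)$ is the pmf on $\{0,1\}$ with mass $p$ at $1$. $x\simeq_\Delta x'$ iff $x'=(x\setminus\{a\})\cup\{a'\}$ with $a\in x$, $a'\notin x$. $\Lambda_\alpha(p\|q)=\sum_{z\in\{0,1\}}p(z)^\alpha q(z)^{1-\alpha}$. *)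

(* Defs.v *)
From HB Require Import structures.
From mathcomp Require Import all_boot all_order all_algebra.
From mathcomp Require Import finmap.
From mathcomp Require Import reals constructive_ereal exp.
Set Implicit Arguments. Unset Strict Implicit. Unset Printing Implicit Defensive.
Import Order.TTheory GRing.Theory Num.Theory.
Local Open Scope ring_scope.
Local Open Scope fset_scope.

(* pmfs on {0,1} are functions bool -> R (true = 1, false = 0). *)
Definition Bern (R : realType) (p : R) : bool -> R :=
  fun z => if z then p else 1 - p.

Definition rr_pmf (R : realType) (theta : R) (hy : bool) : bool -> R :=
  fun z => \sum_(v : bool) Bern theta v *
             (`| (hy : nat)%:R - (1 - (v : nat)%:R) | == (z : nat)%:R :> R)%:R.

Definition batches (T : choiceType) (q : nat) (x : {fset T}) : seq {fset T} :=
  [seq y <- enum_fset (fpowerset x) | #|` y| == q].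

(* m_x = sum_y b_y s_x(y), with s_x(y) = binom(|x|, q)^-1 (without replacement). *)
Definition mix_pmf (R : realType) (T : choiceType) (q : nat) (theta : R)
  (h : {fset T} -> bool) (x : {fset T}) : bool -> R :=
  fun z => \sum_(y <- batches q x) rr_pmf theta (h y) z * ('C(#|` x|, q)%:R)^-1.

Definition neighbour (T : choiceType) (x x' : {fset T}) : Prop :=
  exists a a', [/\ a \in x, a' \notin x & x' = (x `\ a) `|` [fset a']].

(* Lambda_alpha(p || q) = sum_z p(z)^alpha q(z)^(1-alpha), in extended reals,
   with conventions 0^alpha * anything = 0 and c/0 = +oo for c > 0. *)
Definition Lambda (R : realType) (alpha : R) (p q : bool -> R) : \bar R :=
  (\sum_(z : bool)
     (if p z == 0%R then 0%E
      else if q z == 0%R then +oo%E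
      else ((p z `^ alpha) * (q z `^ (1 - alpha)))%:E))%E.

Definition mixture (R : realType) (w : R) (p1 p2 : bool -> R) : bool -> R :=
  fun z => ((1 - w) * p1 z + w * p2 z)%R.

(* Main.v *)
Require Import Defs.
From HB Require Import structures.
From mathcomp Require Import all_boot all_order all_algebra.
From mathcomp Require Import finmap.
From mathcomp Require Import reals constructive_ereal exp.
From mathcomp Require Import ring lra.
Set Implicit Arguments. Unset Strict Implicit. Unset Printing Implicit Defensive.
Import Order.TTheory GRing.Theory Num.Theory.
Local Open Scope ring_scope.
Local Open Scope fset_scope.

Definition rh (R : realType) (th : R) (b : bool) : R := if b then th else 1 - th.

Lemma rr_Bern (R : realType) (th : R) hy z : rr_pmf th hy z = Bern (rh th hy) z.
Proof.
rewrite /rr_pmf big_bool /Bern /rh.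
case: hy; case: z => /=; rewrite ?subrr ?subr0 ?normr0 ?normr1 ?eqxx ?oner_eq0 ?normrN ?(eq_sym 0) ?oner_eq0 /=.
all: rewrite ?subrr ?sub0r ?normrN ?normr0 ?normr1 ?eqxx ?oner_eq0 ?(eq_sym 0) ?oner_eq0 /=; ring.
Qed.

Local Close Scope fset_scope.
Section An.
Variable R : realType.
Implicit Types (al s p q r u v : R).

Lemma bern_tan al s : 1 < al -> 0 <= s -> 1 + al * (s - 1) <= s `^ al.
Proof.
move=> a1 s0.
have a0 : 0 < al by exact: (lt_trans ltr01 a1).
have a10 : 0 < al - 1 by rewrite subr_gt0.
have b0 : 0 < al / (al - 1) by rewrite divr_gt0.
have := @conjugate_powR R s 1 al (al / (al - 1)) s0 ler01 a0 b0.
rewrite powR1 mulr1 invf_div.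
have -> : al^-1 + (al - 1) / al = 1 by field; rewrite gt_eqF.
move=> /(_ erefl) H.
have : al * s <= al * (s `^ al / al + 1 * ((al - 1) / al)) by rewrite ler_pM2l.
have -> : al * (s `^ al / al + 1 * ((al - 1) / al)) = s `^ al + al - 1.
  by field; rewrite gt_eqF.
move=> h2. nra.
Qed.

Lemma powRVl x r : 0 < x -> (x^-1) `^ r = (x `^ r)^-1.
Proof.
move=> x0.
have xi : 0 <= x^-1 by rewrite invr_ge0 ltW.
have h := @powRM R (x^-1) x r xi (ltW x0).
rewrite mulVf ?gt_eqF // powR1 in h.
have hx : x `^ r != 0 by rewrite gt_eqF // powR_gt0.
by apply: (mulIf hx); rewrite mulVf // -h.
Qed.

Definition gg al p q := p `^ al * q `^ (1 - al).

Lemma g_eq al p q r : 1 < al -> 0 <= p -> 0 < q -> 0 < r ->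
  gg al p q = q * r * r `^ (al - 1) * (p / (q * r)) `^ al.
Proof.
move=> a1 p0 q0 r0; rewrite /gg.
have a0 : 0 < al by exact: (lt_trans ltr01 a1).
have qr0 : 0 < q * r by rewrite mulr_gt0.
have qri : 0 <= (q * r)^-1 by rewrite invr_ge0 ltW.
rewrite (powRM _ p0 qri) (powRVl _ qr0) (powRM _ (ltW q0) (ltW r0)).
rewrite -(mulrA q r) (mulr_powRB1 (ltW r0) a0).
rewrite powRD; last by apply/implyP => _; rewrite gt_eqF.
rewrite powRr1 ?ltW // powRN.
have hq : q `^ al != 0 by rewrite gt_eqF // powR_gt0.
have hr : r `^ al != 0 by rewrite gt_eqF // powR_gt0.
by field; rewrite hq hr.
Qed.

Lemma g_tan al p q r : 1 < al -> 0 <= p -> 0 < q -> 0 < r ->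
  al * r `^ (al - 1) * p + (1 - al) * r `^ (al - 1) * r * q <= gg al p q.
Proof.
move=> a1 p0 q0 r0; rewrite (g_eq a1 p0 q0 r0).
set K := r `^ (al - 1).
have K0 : 0 <= K by apply: powR_ge0.
have s0 : 0 <= p / (q * r) by exact: divr_ge0 p0 (mulr_ge0 (ltW q0) (ltW r0)).
have h := bern_tan a1 s0.
have qrK : 0 <= q * r * K by rewrite mulr_ge0 // mulr_ge0 // ltW.
have := ler_wpM2l qrK h.
have -> : q * r * K * (1 + al * (p / (q * r) - 1)) =
  al * K * p + (1 - al) * K * r * q by field; rewrite !gt_eqF.
by [].
Qed.

Lemma g_conv al l p1 q1 p2 q2 : 1 < al -> 0 <= l <= 1 ->
  0 <= p1 -> 0 < q1 -> 0 <= p2 -> 0 < q2 ->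
  gg al (l * p1 + (1 - l) * p2) (l * q1 + (1 - l) * q2) <=
  l * gg al p1 q1 + (1 - l) * gg al p2 q2.
Proof.
move=> a1 /andP[l0 l1] p10 q10 p20 q20.
set pm := l * p1 + (1 - l) * p2; set qm := l * q1 + (1 - l) * q2.
have pm0 : 0 <= pm by rewrite /pm; nra.
have qm0 : 0 < qm by rewrite /qm; nra.
case: (eqVneq pm 0) => [pmz|pmn]; last first.
- have pmp : 0 < pm by rewrite lt0r pmn pm0.
  set r := pm / qm.
  have r0 : 0 < r by rewrite divr_gt0.
  have hr : r * qm = pm by rewrite /r divfK // gt_eqF.
  rewrite (g_eq a1 pm0 qm0 r0).
  have -> : pm / (qm * r) = 1 by rewrite (mulrC qm r) hr divff // gt_eqF.
  rewrite powR1 mulr1.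
  set K := r `^ (al - 1).
  have t1 := g_tan a1 p10 q10 r0; have t2 := g_tan a1 p20 q20 r0.
  rewrite -/K in t1 t2.
  have l0' : 0 <= 1 - l by rewrite subr_ge0.
  have e : l * (al * K * p1 + (1 - al) * K * r * q1) +
     (1 - l) * (al * K * p2 + (1 - al) * K * r * q2) = qm * r * K.
    transitivity (al * K * pm + (1 - al) * K * (r * qm)); first by rewrite /pm /qm; ring.
    by rewrite -[pm]hr; ring.
  rewrite -e lerD // ler_wpM2l //.
- rewrite pmz /gg powR0 ?mul0r; last by rewrite gt_eqF // (lt_trans ltr01 a1).
  rewrite addr_ge0 // mulr_ge0 // ?subr_ge0 // mulr_ge0 // ?powR_ge0 //.
Qed.

Definition GG al u v := gg al u v + gg al (1 - u) (1 - v).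

Lemma G_conv al l u1 v1 u2 v2 : 1 < al -> 0 <= l <= 1 ->
  0 <= u1 <= 1 -> 0 < v1 < 1 -> 0 <= u2 <= 1 -> 0 < v2 < 1 ->
  GG al (l * u1 + (1 - l) * u2) (l * v1 + (1 - l) * v2) <=
  Order.max (GG al u1 v1) (GG al u2 v2).
Proof.
move=> a1 hl /andP[u10 u11] /andP[v10 v11] /andP[u20 u21] /andP[v20 v21].
have e1 : 1 - (l * u1 + (1 - l) * u2) = l * (1 - u1) + (1 - l) * (1 - u2) by ring.
have e2 : 1 - (l * v1 + (1 - l) * v2) = l * (1 - v1) + (1 - l) * (1 - v2) by ring.
rewrite /GG e1 e2.
have h1 := g_conv a1 hl u10 v10 u20 v20.
have h2 := g_conv a1 hl (p1 := 1 - u1) (q1 := 1 - v1) (p2 := 1 - u2) (q2 := 1 - v2).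
rewrite !subr_ge0 !subr_gt0 in h2.
have {}h2 := h2 u11 v11 u21 v21.
apply: le_trans (lerD h1 h2) _.
set M := Order.max _ _.
have hM1 : gg al u1 v1 + gg al (1 - u1) (1 - v1) <= M by rewrite le_max lexx.
have hM2 : gg al u2 v2 + gg al (1 - u2) (1 - v2) <= M by rewrite le_max lexx orbT.
case/andP: hl => l0 l1.
have l0' : 0 <= 1 - l by rewrite subr_ge0.
have := ler_wpM2l l0 hM1; have := ler_wpM2l l0' hM2.
move=> H1 H2.
have -> : l * gg al u1 v1 + (1 - l) * gg al u2 v2 +
    (l * gg al (1 - u1) (1 - v1) + (1 - l) * gg al (1 - u2) (1 - v2)) =
    l * (gg al u1 v1 + gg al (1 - u1) (1 - v1)) +
    (1 - l) * (gg al u2 v2 + gg al (1 - u2) (1 - v2)) by ring.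
apply: le_trans (lerD H2 H1) _.
by rewrite -mulrDl addrC subrK mul1r.
Qed.

Lemma seg al lo hh t x y A1 A2 D1 D2 u1 u2 v1 v2 : 1 < al -> lo < hh ->
  lo <= t <= hh -> x = A1 + t * D1 -> y = A2 + t * D2 ->
  u1 = A1 + lo * D1 -> u2 = A2 + lo * D2 ->
  v1 = A1 + hh * D1 -> v2 = A2 + hh * D2 ->
  0 <= u1 <= 1 -> 0 < u2 < 1 -> 0 <= v1 <= 1 -> 0 < v2 < 1 ->
  GG al x y <= Order.max (GG al u1 u2) (GG al v1 v2).
Proof.
move=> a1 lh /andP[t0 t1] -> -> -> -> -> -> hu1 hu2 hv1 hv2.
set l := (hh - t) / (hh - lo).
have hd : hh - lo != 0 by rewrite subr_eq0 gt_eqF.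
have hd0 : 0 < hh - lo by rewrite subr_gt0.
have hl : 0 <= l <= 1.
  rewrite /l; apply/andP; split; [apply: divr_ge0; rewrite subr_ge0 | rewrite ler_pdivrMr // mul1r]; lra.
have e1 : A1 + t * D1 = l * (A1 + lo * D1) + (1 - l) * (A1 + hh * D1)
  by rewrite /l; field.
have e2 : A2 + t * D2 = l * (A2 + lo * D2) + (1 - l) * (A2 + hh * D2)
  by rewrite /l; field.
by rewrite e1 e2; apply: G_conv.
Qed.

Lemma G_ge1 al u v : 1 < al -> 0 <= u <= 1 -> 0 < v < 1 -> 1 <= GG al u v.
Proof.
move=> a1 /andP[u0 u1] /andP[v0 v1].
have t1 := g_tan a1 u0 v0 ltr01.
have t2 := g_tan a1 (p := 1 - u) (q := 1 - v) (r := 1).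
rewrite subr_ge0 subr_gt0 in t2; have {}t2 := t2 u1 v1 ltr01.
rewrite powR1 in t1 t2.
have := lerD t1 t2; rewrite /GG.
have -> : al * 1 * u + (1 - al) * 1 * 1 * v +
   (al * 1 * (1 - u) + (1 - al) * 1 * 1 * (1 - v)) = 1 by ring.
by [].
Qed.

Lemma G_diag al u : 1 < al -> 0 < u < 1 -> GG al u u = 1.
Proof.
move=> a1 /andP[u0 u1].
rewrite /GG (g_eq a1 (ltW u0) u0 ltr01).
have u0' : 0 < 1 - u by rewrite subr_gt0.
rewrite (g_eq a1 (ltW u0') u0' ltr01) !mulr1 !divff ?gt_eqF // powR1 /=.
by rewrite !mulr1 addrC subrK.
Qed.

Lemma G_sym al u v : GG al (1 - u) (1 - v) = GG al u v.
Proof. rewrite /GG addrC; congr (_ + _); congr gg; ring. Qed.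


Lemma core al lo hh w a b b' : 1 < al -> 0 < lo -> lo <= hh -> hh < 1 ->
  lo + hh = 1 -> 0 <= w <= 1 -> lo <= a <= hh -> lo <= b <= hh -> lo <= b' <= hh ->
  GG al ((1 - w) * a + w * b) ((1 - w) * a + w * b') <=
  Order.max (GG al hh ((1 - w) * hh + w * lo)) (GG al ((1 - w) * hh + w * lo) hh).
Proof.
move=> a1 lo0 lohh hh1 lh /andP[w0 w1] ha hb hb'.
set c := (1 - w) * hh + w * lo.
set M := Order.max _ _.
pose m a b := (1 - w) * a + w * b.
have mix : forall a b, lo <= a <= hh -> lo <= b <= hh -> lo <= m a b <= hh.
  move=> a0 b0 /andP[? ?] /andP[? ?]; rewrite /m; apply/andP; split; nra.
have i01 : forall z, lo <= z <= hh -> 0 < z < 1.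
  by move=> z /andP[? ?]; apply/andP; split; lra.
have i01w : forall z, lo <= z <= hh -> 0 <= z <= 1.
  by move=> z /andP[? ?]; apply/andP; split; lra.
have hlo : lo <= lo <= hh by rewrite lexx lohh.
have hhh : lo <= hh <= hh by rewrite lexx lohh.
have hc : lo <= c <= hh by exact: mix.
have M1 : 1 <= M.
  by apply: le_trans (G_ge1 a1 (i01w _ hhh) (i01 _ hc)) _; rewrite le_max lexx.
have Mhc : GG al hh c <= M by rewrite le_max lexx.
have Mch : GG al c hh <= M by rewrite le_max lexx orbT.
have e1 : 1 - hh = lo by lra.
have e2 : m lo hh = 1 - c by rewrite /m /c -e1; ring.
have e3 : m lo lo = 1 - hh by rewrite /m e1; ring.
have e4 : m hh hh = hh by rewrite /m; ring.
have e5 : m hh lo = c by [].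
have Mdiag : forall z, lo <= z <= hh -> GG al z z <= M.
  by move=> z hz; rewrite G_diag ?i01.
case: (eqVneq lo hh) => [eqlh|nlh].
  have -> : b' = b.
    move: hb hb'; rewrite -eqlh => /andP[? ?] /andP[? ?]; lra.
  by apply: Mdiag; apply: mix.
have lth : lo < hh by rewrite lt_neqAle nlh lohh.
have C1 : forall a, lo <= a <= hh -> GG al (m a hh) (m a lo) <= M.
  move=> a0 ha0.
  have := @seg al lo hh a0 (m a0 hh) (m a0 lo) (w * hh) (w * lo) (1 - w) (1 - w)
    (m lo hh) (m lo lo) (m hh hh) (m hh lo) a1 lth ha0.
  move=> H.
  have {H} := H ltac:(rewrite /m; ring) ltac:(rewrite /m; ring) ltac:(rewrite /m; ring)
    ltac:(rewrite /m; ring) ltac:(rewrite /m; ring) ltac:(rewrite /m; ring).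
  rewrite e2 e3 e4 G_sym => H.
  apply: le_trans (H _ _ _ _) _; rewrite ?ge_max ?Mhc ?Mch //.
  - by rewrite -e2; apply: i01w; apply: mix.
  - by rewrite -e3; apply: i01; apply: mix.
  - by apply: i01w.
  - by apply: i01.
have C2 : forall a, lo <= a <= hh -> GG al (m a lo) (m a hh) <= M.
  move=> a0 ha0.
  have := @seg al lo hh a0 (m a0 lo) (m a0 hh) (w * lo) (w * hh) (1 - w) (1 - w)
    (m lo lo) (m lo hh) (m hh lo) (m hh hh) a1 lth ha0.
  move=> H.
  have {H} := H ltac:(rewrite /m; ring) ltac:(rewrite /m; ring) ltac:(rewrite /m; ring)
    ltac:(rewrite /m; ring) ltac:(rewrite /m; ring) ltac:(rewrite /m; ring).
  rewrite e2 e3 e4 G_sym => H.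
  apply: le_trans (H _ _ _ _) _; rewrite ?ge_max ?Mhc ?Mch //.
  - by rewrite -e3; apply: i01w; apply: mix.
  - by rewrite -e2; apply: i01; apply: mix.
  - by apply: i01w.
  - by apply: i01.
have Sb' : forall be, (be = lo \/ be = hh) -> GG al (m a be) (m a b') <= M.
  move=> be hbe'.
  have hbe : lo <= be <= hh by case: hbe' => ->.
  have := @seg al lo hh b' (m a be) (m a b') (m a be) ((1 - w) * a) 0 w
    (m a be) (m a lo) (m a be) (m a hh) a1 lth hb'.
  move=> H.
  have {H} := H ltac:(rewrite /m; ring) ltac:(rewrite /m; ring) ltac:(rewrite /m; ring)
    ltac:(rewrite /m; ring) ltac:(rewrite /m; ring) ltac:(rewrite /m; ring).
  move=> H.
  apply: le_trans (H _ _ _ _) _; rewrite ?ge_max.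
  - by apply: i01w; apply: mix.
  - by apply: i01; apply: mix.
  - by apply: i01w; apply: mix.
  - by apply: i01; apply: mix.
  by case: hbe' => ->; rewrite Mdiag ?mix ?C1 ?C2.
have := @seg al lo hh b (m a b) (m a b') ((1 - w) * a) (m a b') w 0
    (m a lo) (m a b') (m a hh) (m a b') a1 lth hb.
move=> H.
have {H} := H ltac:(rewrite /m; ring) ltac:(rewrite /m; ring) ltac:(rewrite /m; ring)
    ltac:(rewrite /m; ring) ltac:(rewrite /m; ring) ltac:(rewrite /m; ring).
move=> H.
apply: le_trans (H _ _ _ _) _; rewrite ?ge_max ?Sb' //; try by [left|right].
- by apply: i01w; apply: mix.
- by apply: i01; apply: mix.
- by apply: i01w; apply: mix.
- by apply: i01; apply: mix.
Qed.
End An.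

Section Lam.
Variable R : realType.
Local Open Scope ereal_scope.

Lemma Lambda_ext (al : R) p p' q q' : p =1 p' -> q =1 q' ->
  Lambda al p q = Lambda al p' q'.
Proof. by move=> hp hq; rewrite /Lambda; apply: eq_bigr => z _; rewrite hp hq. Qed.

Lemma Lambda_GG (al u v : R) (p q : bool -> R) : (0 < u < 1)%R -> (0 < v < 1)%R ->
  p true = u -> p false = (1 - u)%R -> q true = v -> q false = (1 - v)%R ->
  Lambda al p q = (GG al u v)%:E.
Proof.
move=> /andP[u0 u1] /andP[v0 v1] pt pf qt qf.
rewrite /Lambda big_bool pt pf qt qf /GG /gg.
rewrite !gt_eqF ?subr_gt0 //.
Qed.

Lemma Lambda_oo (al : R) (p q : bool -> R) z : p z != 0%R -> q z = 0%R ->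
  Lambda al p q = +oo.
Proof.
move=> hp hq.
have nN : forall z', (if p z' == 0%R then 0 else if q z' == 0%R then +oo
      else ((p z' `^ al) * (q z' `^ (1 - al)))%:E) != -oo.
  by move=> z'; case: ifP => _ //; case: ifP.
rewrite /Lambda big_bool.
case: z hp hq => hp hq.
  by rewrite (negbTE hp) hq eqxx /= addye // nN.
by rewrite (negbTE hp) hq eqxx /= addey // nN.
Qed.

Lemma Lambda_self (al : R) (p : bool -> R) : (forall z, 0 <= p z)%R ->
  Lambda al p p = (p true + p false)%:E.
Proof.
move=> p0; rewrite /Lambda big_bool EFinD.
have H : forall z, (if p z == 0%R then 0 else if p z == 0%R then +oo
      else ((p z `^ al) * (p z `^ (1 - al)))%:E) = (p z)%:E.
  move=> z; case: eqP => [->//|/eqP pn].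
  rewrite -powRD; last by rewrite pn implybT.
  by rewrite addrC subrK powRr1.
by rewrite !H.
Qed.
End Lam.

Local Open Scope fset_scope.
Section Comb.
Variable T : choiceType.
Implicit Types (X y z : {fset T}).

Lemma mem_batches k X y : (y \in batches k X) = (y `<=` X) && (#|`y| == k).
Proof. by rewrite /batches mem_filter andbC -fpowersetE. Qed.

Lemma uniq_batches k X : uniq (batches k X).
Proof. exact: filter_uniq (fset_uniq _). Qed.

Lemma batches0 X : perm_eq (batches 0 X) [:: fset0].
Proof.
apply: uniq_perm => //; first exact: uniq_batches.
move=> y; rewrite mem_batches inE cardfs_eq0.
by case: eqP => [->|]; rewrite ?fsub0set ?andbF.
Qed.

Lemma batchesS X a k : a \in X ->
  perm_eq (batches k.+1 X)
          (batches k.+1 (X `\ a) ++ map (fun z => a |` z) (batches k (X `\ a))).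
Proof.
move=> aX.
have nin : forall z, z \in batches k (X `\ a) -> a \notin z.
  move=> z; rewrite mem_batches fsubsetD1 => /andP[/andP[_ ->] _] //.
apply: uniq_perm; first exact: uniq_batches.
  rewrite cat_uniq uniq_batches /=; apply/andP; split.
    apply/hasPn => y /mapP [z _ ->]; rewrite mem_batches fsubsetD1.
    by rewrite fset1U1 /= andbF.
  rewrite map_inj_in_uniq ?uniq_batches //.
  by move=> z1 z2 /nin h1 /nin h2 e; rewrite -(fsetU1K h1) e fsetU1K.
move=> y; rewrite mem_cat mem_batches; apply/idP/idP.
  move=> /andP[yX /eqP cy].
  case ay: (a \in y).
    apply/orP; right; apply/mapP; exists (y `\ a); last by rewrite fsetD1K.
    rewrite mem_batches fsubsetD1 fsetD11 andbT.
    rewrite (fsubset_trans (fsubD1set _ _) yX) /=.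
    by move: cy; rewrite (cardfsD1 a y) ay add1n => -[->].
  by apply/orP; left; rewrite mem_batches fsubsetD1 yX ay cy eqxx.
case/orP.
  rewrite !mem_batches => /andP[yX ->]; rewrite andbT.
  exact: fsubset_trans yX (fsubD1set _ _).
move=> /mapP [z zB ->]; have az := nin _ zB.
move: zB; rewrite mem_batches => /andP[zX /eqP cz].
rewrite fsubUset fsub1set aX (fsubset_trans zX (fsubD1set _ _)) /=.
by rewrite cardfsU1 az cz.
Qed.

Lemma sum_batchesS (R : realType) (F : {fset T} -> R) X a k : a \in X ->
  \sum_(y <- batches k.+1 X) F y =
  (\sum_(y <- batches k.+1 (X `\ a)) F y + \sum_(z <- batches k (X `\ a)) F (a |` z))%R.
Proof. by move=> aX; rewrite (perm_big _ (batchesS k aX)) big_cat big_map. Qed.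

Lemma size_batches k X : size (batches k X) = 'C(#|`X|, k).
Proof.
suff H : forall n X k,  #|`X| = n -> size (batches k X) = 'C(n, k) by exact: H.
clear k.
move=> n; elim: n => [|n IH] {}X [|k] hX.
- by rewrite (perm_size (batches0 X)) bin0.
- rewrite bin0n /=; case E: (batches k.+1 X) => [//|y s].
  have : y \in batches k.+1 X by rewrite E mem_head.
  rewrite mem_batches => /andP[/fsubset_leq_card]; rewrite hX leqn0 => /eqP ->.
  by [].
- by rewrite (perm_size (batches0 X)) bin0.
- case: (fset_0Vmem X) => [X0|[a aX]].
    by move: hX; rewrite X0 cardfs0.
  have hn : #|` X `\ a| = n by move: hX; rewrite (cardfsD1 a X) aX add1n => -[].
  by rewrite (perm_size (batchesS k aX)) size_cat size_map binS !IH.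
Qed.
End Comb.

Section Main.
Variable R : realType.
Local Close Scope fset_scope.

Lemma sum_cst (I : Type) (s : seq I) (c : R) : \sum_(y <- s) c = c * (size s)%:R.
Proof. by rewrite big_const_seq count_predT iter_addr_0 mulr_natr. Qed.

Lemma sum_bounds (I : Type) (s : seq I) (f : I -> R) lo hh :
  (forall b, lo <= f b <= hh) ->
  lo * (size s)%:R <= \sum_(y <- s) f y <= hh * (size s)%:R.
Proof.
move=> hf; rewrite -!sum_cst; apply/andP; split; apply: ler_sum => i _;
  by case/andP: (hf i).
Qed.

Lemma div_bounds (lo hh S n : R) : 0 < n -> lo * n <= S <= hh * n -> lo <= S / n <= hh.
Proof.
move=> n0 /andP[h1 h2]; apply/andP; split.
  by rewrite ler_pdivlMr.
by rewrite ler_pdivrMr.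
Qed.

Lemma mix_Bern (T : choiceType) q (th : R) (h : {fset T} -> bool) x z :
  (q <= #|`x|)%N ->
  mix_pmf q th h x z =
  Bern ((\sum_(y <- batches q x) rh th (h y)) / ('C(#|`x|, q))%:R) z.
Proof.
move=> qx; rewrite /mix_pmf.
under eq_bigr do rewrite rr_Bern.
rewrite -mulr_suml; case: z => //=.
have C0 : ('C(#|`x|, q))%:R != 0 :> R by rewrite pnatr_eq0 -lt0n bin_gt0.
rewrite /Bern /= sumrB sum_cst size_batches mul1r mulrBl divff //.
Qed.

Lemma key_real (al w lo hh S0 S1 S1' n0 n1 : R) : 1 < al -> 0 < lo -> lo <= hh ->
  hh < 1 -> lo + hh = 1 -> 0 < n0 -> 0 < n1 -> w = n1 / (n0 + n1) ->
  lo * n0 <= S0 <= hh * n0 -> lo * n1 <= S1 <= hh * n1 -> lo * n1 <= S1' <= hh * n1 ->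
  GG al ((S0 + S1) / (n0 + n1)) ((S0 + S1') / (n0 + n1)) <=
  Order.max (GG al hh ((1 - w) * hh + w * lo)) (GG al ((1 - w) * hh + w * lo) hh).
Proof.
move=> a1 lo0 lohh hh1 lh n00 n10 -> h0 h1 h1'.
have nn : n0 + n1 != 0 by rewrite gt_eqF // addr_gt0.
have e : forall S S', (S + S') / (n0 + n1) =
    (1 - n1 / (n0 + n1)) * (S / n0) + n1 / (n0 + n1) * (S' / n1).
  by move=> S S'; field; rewrite nn !gt_eqF.
rewrite !e; apply: core => //.
- apply/andP; split; first by rewrite divr_ge0 // ltW // addr_gt0.
  by rewrite ler_pdivrMr ?addr_gt0 // mul1r lerDr ltW.
- exact: div_bounds.
- exact: div_bounds.
- exact: div_bounds.
Qed.
End Main.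

Local Open Scope fset_scope.
Theorem mainTheorem13 (R : realType) (T : choiceType) (q N : nat)
  (theta alpha : R) (h : {fset T} -> bool) (x x' : {fset T}) :
  0 <= theta <= 1 -> 1 < alpha ->
  (q < N)%N -> #|` x| = N -> neighbour x x' ->
  let w := (q%:R / N%:R : R) in
  (Lambda alpha (mix_pmf q theta h x) (mix_pmf q theta h x')
   <= Order.max
        (Lambda alpha (mixture w (Bern theta) (Bern theta))
                      (mixture w (Bern theta) (Bern (1 - theta))))
        (Lambda alpha (mixture w (Bern theta) (Bern (1 - theta)))
                      (mixture w (Bern theta) (Bern (1 - (1 - theta))))))%E.
Proof.
move=> /andP[th0 th1] a1 qN hN [a [a' [ax a'x ex']]].
cbv zeta; set w := (q%:R / N%:R : R).
set X0 := x `\ a.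
have hX0 : #|` X0| = N.-1 by rewrite -hN (cardfsD1 a x) ax.
have a'X0 : a' \notin X0 by apply: contra a'x => /fsetD1P[].
have hN' : #|` x'| = N.
  by rewrite ex' fsetUC cardfsU1 a'X0 hX0 add1n prednK // (leq_ltn_trans _ qN).
have x'a' : x' `\ a' = X0 by rewrite ex' fsetUC fsetU1K.
have a'x' : a' \in x' by rewrite ex' fsetU1r.
have qx : (q <= #|`x|)%N by rewrite hN ltnW.
have qx' : (q <= #|`x'|)%N by rewrite hN' ltnW.
set Sx := \sum_(y <- batches q x) rh theta (h y).
set Sx' := \sum_(y <- batches q x') rh theta (h y).
rewrite (@Lambda_ext _ _ _ (Bern (Sx / ('C(N, q))%:R)) _ (Bern (Sx' / ('C(N, q))%:R)));
  last 2 first.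
- by move=> z; rewrite mix_Bern // hN.
- by move=> z; rewrite mix_Bern // hN'.
have rh01 : forall b, 0 <= rh theta b <= 1.
  by move=> [] /=; rewrite ?th0 ?th1 // subr_ge0 th1 /= lerBlDr lerDl.
case: q qN hN qx qx' @w @Sx @Sx' => [|k] qN hN qx qx' w Sx Sx'.
- have e0 : forall X, \sum_(y <- batches 0 X) rh theta (h y) = rh theta (h fset0).
    by move=> X; rewrite (perm_big _ (batches0 X)) big_seq1.
  rewrite /Sx /Sx' !e0 bin0 divr1 Lambda_self; last by move=> [] /=; case/andP: (rh01 (h fset0)) => ? ?; rewrite ?subr_ge0.
  rewrite (@Lambda_ext _ _ _ (Bern theta) _ (Bern theta)); first last.
  + by move=> z; rewrite /mixture /w mul0r subr0 mul1r mul0r addr0.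
  + by move=> z; rewrite /mixture /w mul0r subr0 mul1r mul0r addr0.
  rewrite Lambda_self; last by move=> [] /=; rewrite ?subr_ge0.
  by rewrite /Bern !subrKC le_max lexx.
case: N qN hN hX0 hN' @w => [//|n] qN hN hX0 hN' w.
rewrite /= in hX0.
set n0 := 'C(n, k.+1); set n1 := 'C(n, k).
have n00 : (0 < n0)%N by rewrite bin_gt0.
have n10 : (0 < n1)%N by rewrite bin_gt0 ltnW.
set S0 := \sum_(y <- batches k.+1 X0) rh theta (h y).
set S1 := \sum_(z <- batches k X0) rh theta (h (a |` z)).
set S1' := \sum_(z <- batches k X0) rh theta (h (a' |` z)).
have eSx : Sx = (S0 + S1)%R by rewrite /Sx (sum_batchesS _ _ ax).
have eSx' : Sx' = (S0 + S1')%R by rewrite /Sx' (sum_batchesS _ _ a'x') x'a'.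
have eC : ('C(n.+1, k.+1))%:R = (n0%:R + n1%:R :> R)%R by rewrite binS natrD.
rewrite eSx eSx' eC.
have ew : w = (n1%:R / (n0%:R + n1%:R))%R.
  have bN : (0 < 'C(n.+1, k.+1))%N by rewrite bin_gt0 ltnW.
  rewrite /w -natrD -binS; apply/eqP; rewrite eqr_div ?pnatr_eq0 -?lt0n ?bN //.
  by rewrite -!natrM; apply/eqP; congr (_%:R); rewrite -(mul_bin_diag n.+1 k) mulnC.
set c := ((1 - w) * theta + w * (1 - theta))%R.
have main : forall lo hh, (0 < lo)%R -> (lo <= hh)%R -> (hh < 1)%R -> (lo + hh = 1)%R ->
   (forall b, lo <= rh theta b <= hh)%R ->
   (Lambda alpha (Bern ((S0 + S1) / (n0%:R + n1%:R))%R) (Bern ((S0 + S1') / (n0%:R + n1%:R))%R)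
   <= Order.max (GG alpha hh ((1 - w) * hh + w * lo)%R)%:E
                (GG alpha ((1 - w) * hh + w * lo)%R hh)%:E)%E.
  move=> lo hh lo0 lohh hh1 lh hb.
  have n0r : (0 < n0%:R :> R)%R by rewrite ltr0n.
  have n1r : (0 < n1%:R :> R)%R by rewrite ltr0n.
  have b0 : (lo * n0%:R <= S0 <= hh * n0%:R)%R.
    by rewrite /n0 -hX0 -size_batches; apply: sum_bounds.
  have b1 : (lo * n1%:R <= S1 <= hh * n1%:R)%R.
    by rewrite /n1 -hX0 -size_batches; apply: sum_bounds.
  have b1' : (lo * n1%:R <= S1' <= hh * n1%:R)%R.
    by rewrite /n1 -hX0 -size_batches; apply: sum_bounds.
  have nn : (0 < n0%:R + n1%:R :> R)%R by rewrite addr_gt0.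
  have i01 : forall S, (lo * (n0%:R + n1%:R) <= S <= hh * (n0%:R + n1%:R) ->
      0 < S / (n0%:R + n1%:R) < 1)%R.
    move=> S hS; have /andP[? ?] := div_bounds nn hS; apply/andP; split; lra.
  rewrite (@Lambda_GG _ _ ((S0 + S1) / (n0%:R + n1%:R)) ((S0 + S1') / (n0%:R + n1%:R)))
    //; last 2 first.
  + apply: i01; case/andP: b0 => ? ?; case/andP: b1 => ? ?; apply/andP; split; lra.
  + apply: i01; case/andP: b0 => ? ?; case/andP: b1' => ? ?; apply/andP; split; lra.
  rewrite le_max !lee_fin -le_max.
  by apply: key_real => //; rewrite ltr0n.
have w0 : (0 < w)%R by rewrite /w divr_gt0 // ltr0n.
have w1 : (w < 1)%R by rewrite /w ltr_pdivrMr ?ltr0n // mul1r ltr_nat.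
have [th00|th0n] := eqVneq theta 0.
  rewrite (@Lambda_oo _ _ (mixture w (Bern theta) (Bern (1 - theta))) _ true).
  - by rewrite le_max leey orbT.
  - by rewrite /mixture /Bern th00 mulr0 add0r subr0 mulr1 gt_eqF.
  - by rewrite /mixture /Bern th00 mulr0 add0r subr0 subrr mulr0.
have [th11|th1n] := eqVneq theta 1.
  rewrite (@Lambda_oo _ _ (mixture w (Bern theta) (Bern (1 - theta))) _ false).
  - by rewrite le_max leey orbT.
  - by rewrite /mixture /Bern th11 subrr mulr0 add0r subr0 mulr1 gt_eqF.
  - by rewrite /mixture /Bern th11 !subrr subr0 subrr !mulr0 add0r.
have th0' : (0 < theta)%R by rewrite lt0r th0n th0.
have th1' : (theta < 1)%R by rewrite lt_neqAle th1n th1.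
have c01 : (0 < c < 1)%R by rewrite /c; apply/andP; split; nra.
have t01 : (0 < theta < 1)%R by rewrite th0' th1'.
have r1 : Lambda alpha (mixture w (Bern theta) (Bern theta))
    (mixture w (Bern theta) (Bern (1 - theta))) = (GG alpha theta c)%:E.
  by apply: Lambda_GG => //; rewrite /mixture /Bern /c; ring.
have r2 : Lambda alpha (mixture w (Bern theta) (Bern (1 - theta)))
    (mixture w (Bern theta) (Bern (1 - (1 - theta)))) = (GG alpha c theta)%:E.
  by apply: Lambda_GG => //; rewrite /mixture /Bern /c; ring.
rewrite r1 r2.
have [le|lt] := leP (1 - theta) theta.
  apply: le_trans (main (1 - theta) theta _ _ _ _ _) _.
  - by rewrite subr_gt0.
  - by [].
  - by [].
  - by ring.
  - by move=> [] /=; rewrite ?lexx ?le ?andbT.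
  by rewrite -/c.
apply: le_trans (main theta (1 - theta) _ _ _ _ _) _.
- by [].
- exact: ltW.
- by rewrite ltrBlDr ltrDl.
- by ring.
- by move=> [] /=; rewrite ?lexx ?(ltW lt) ?andbT.
have -> : ((1 - w) * (1 - theta) + w * theta = 1 - c)%R by rewrite /c; ring.
rewrite G_sym.
by rewrite G_sym.
Qed.
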